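(* Let $G$ be a po-group. The po-group $\mathbb Z \overrightarrow{\times} G$ satisfies RDP$_1$ if and only if $G$ is directed and satisfies RDP$_1$.
   Context: A po-group is a (not necessarily Abelian, additively written) group with a partial order $\le$ such that $a\le b$ implies $x+a+y\le x+b+y$; $G^+$ is its positive cone; $G$ is directed if any two elements have a common upper bound. $\mathbb Z \overrightarrow{\times} G$ is the group $\mathbb Z\times G$ (componentwise operation) with the lexicographic order: $(m,g)\le(n,h)$ iff $m<n$, or $m=n$ and $g\le h$. RDP$_1$: for all $a_1,a_2,b_1,b_2$ in the positive cone with $a_1+a_2=b_1+b_2$ there are positive $c_{11},c_{12},c_{21},c_{22}$ with $a_1=c_{11}+c_{12}$, $a_2=c_{21}+c_{22}$, $b_1=c_{11}+c_{21}$, $b_2=c_{12}+c_{22}$, such that $0\le x\le c_{12}$ and $0\le y\le c_{21}$ imply $x+y=y+x$. *)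

(* Defs.v *)
From Stdlib Require Import ZArith.

Record POGroup := {
  car :> Type;
  add : car -> car -> car;
  zero : car;
  opp : car -> car;
  le : car -> car -> Prop;
  addA : forall x y z, add x (add y z) = add (add x y) z;
  add0l : forall x, add zero x = x;
  add0r : forall x, add x zero = x;
  addNl : forall x, add (opp x) x = zero;
  addNr : forall x, add x (opp x) = zero;
  le_refl : forall x, le x x;
  le_trans : forall x y z, le x y -> le y z -> le x z;
  le_anti : forall x y, le x y -> le y x -> x = y;
  le_compat : forall a b x y, le a b -> le (add (add x a) y) (add (add x b) y)
}.

Arguments add {p}.
Arguments zero {p}.
Arguments opp {p}.
Arguments le {p}.

Definition directed (G : POGroup) : Prop :=
  forall a b : G, exists c : G, le a c /\ le b c.

Definition RDP1 {T : Type} (add : T -> T -> T) (zero : T) (le : T -> T -> Prop)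
  : Prop :=
  forall a1 a2 b1 b2 : T,
    le zero a1 -> le zero a2 -> le zero b1 -> le zero b2 ->
    add a1 a2 = add b1 b2 ->
    exists c11 c12 c21 c22 : T,
      le zero c11 /\ le zero c12 /\ le zero c21 /\ le zero c22 /\
      a1 = add c11 c12 /\ a2 = add c21 c22 /\
      b1 = add c11 c21 /\ b2 = add c12 c22 /\
      (forall x y : T, le zero x -> le x c12 -> le zero y -> le y c21 ->
         add x y = add y x).

Definition RDP1_pog (G : POGroup) : Prop := RDP1 (@add G) (@zero G) (@le G).

(** The lexicographic product Z ->x G: carrier Z * G, componentwise group
    operation, and (m,g) <= (n,h) iff m < n, or m = n and g <= h. *)
Definition lex_add (G : POGroup) (u v : Z * G) : Z * G :=
  ((fst u + fst v)%Z, add (snd u) (snd v)).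
Definition lex_zero (G : POGroup) : Z * G := (0%Z, zero).
Definition lex_le (G : POGroup) (u v : Z * G) : Prop :=
  (fst u < fst v)%Z \/ (fst u = fst v /\ le (snd u) (snd v)).

(* Main.v *)
Require Import Defs.
From Stdlib Require Import ZArith Lia.

Lemma addKl (G : POGroup) (x y : G) : add (opp x) (add x y) = y.
Proof. rewrite addA, addNl, add0l; reflexivity. Qed.
Lemma addNKl (G : POGroup) (x y : G) : add x (add (opp x) y) = y.
Proof. rewrite addA, addNr, add0l; reflexivity. Qed.
Lemma addKr (G : POGroup) (x y : G) : add (add y x) (opp x) = y.
Proof. rewrite <- addA, addNr, add0r; reflexivity. Qed.
Lemma addNKr (G : POGroup) (x y : G) : add (add y (opp x)) x = y.
Proof. rewrite <- addA, addNl, add0r; reflexivity. Qed.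
Lemma add_cancel_l (G : POGroup) (x y z : G) : add x y = add x z -> y = z.
Proof. intro H. rewrite <- (addKl G x y), H, addKl; reflexivity. Qed.
Lemma add_cancel_r (G : POGroup) (x y z : G) : add y x = add z x -> y = z.
Proof. intro H. rewrite <- (addKr G x y), H, addKr; reflexivity. Qed.
Lemma le_addl (G : POGroup) (a b x : G) : le a b -> le (add x a) (add x b).
Proof. intro H. pose proof (le_compat G a b x zero H) as K. rewrite !add0r in K. exact K. Qed.
Lemma le_addr (G : POGroup) (a b y : G) : le a b -> le (add a y) (add b y).
Proof. intro H. pose proof (le_compat G a b zero y H) as K. rewrite !add0l in K. exact K. Qed.
Lemma le_add_pos_r (G : POGroup) (x c : G) : le zero c -> le x (add x c).
Proof. intro H. pose proof (le_addl G _ _ x H) as K. rewrite add0r in K. exact K. Qed.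
Lemma le_add_pos_l (G : POGroup) (x c : G) : le zero c -> le x (add c x).
Proof. intro H. pose proof (le_addr G _ _ x H) as K. rewrite add0l in K. exact K. Qed.
Lemma le_sub_l (G : POGroup) (a u : G) : le a u -> le zero (add (opp a) u).
Proof. intro H. pose proof (le_addl G _ _ (opp a) H) as K. rewrite addNl in K. exact K. Qed.
Lemma le_sub_r (G : POGroup) (a u : G) : le a u -> le zero (add u (opp a)).
Proof. intro H. pose proof (le_addr G _ _ (opp a) H) as K. rewrite addNr in K. exact K. Qed.
Lemma le_opp (G : POGroup) (x y : G) : le x y -> le (opp y) (opp x).
Proof.
  intro H. pose proof (le_compat G x y (opp y) (opp x) H) as K.
  rewrite <- addA, addNr, add0r, addNl, add0l in K. exact K.
Qed.
Lemma opp_opp (G : POGroup) (a : G) : opp (opp a) = a.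
Proof.
  rewrite <- (add0r G (opp (opp a))), <- (addNl G a), addA, addNl, add0l. reflexivity.
Qed.

Lemma lex_pos (G : POGroup) q (g : G) :
  lex_le G (lex_zero G) (q, g) <-> (0 < q)%Z \/ (0%Z = q /\ le zero g).
Proof. unfold lex_le, lex_zero; simpl; tauto. Qed.
Lemma pos_fst (G : POGroup) q (g : G) : lex_le G (lex_zero G) (q, g) -> (0 <= q)%Z.
Proof. rewrite lex_pos. intros [h|[h _]]; lia. Qed.
Lemma pos_snd0 (G : POGroup) (g : G) : lex_le G (lex_zero G) (0%Z, g) -> le zero g.
Proof. rewrite lex_pos. intros [h|[_ h]]; [lia|exact h]. Qed.

Lemma lex_comm (G : POGroup) (c12 c21 : G) :
  (forall x y : G, le zero x -> le x c12 -> le zero y -> le y c21 -> add x y = add y x) ->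
  forall X Y : Z * G, lex_le G (lex_zero G) X -> lex_le G X (0%Z, c12) ->
    lex_le G (lex_zero G) Y -> lex_le G Y (0%Z, c21) -> lex_add G X Y = lex_add G Y X.
Proof.
  intros H [p x] [q y]; unfold lex_le, lex_zero, lex_add; simpl.
  intros [h1|[h1 h1']] [h2|[h2 h2']] [h3|[h3 h3']] [h4|[h4 h4']]; try lia.
  subst. f_equal. apply H; assumption.
Qed.

Lemma lex_comm_zero_l (G : POGroup) :
  forall X Y : Z * G, lex_le G (lex_zero G) X -> lex_le G X (0%Z, zero) ->
    lex_add G X Y = lex_add G Y X.
Proof.
  intros [p x] [q y]; unfold lex_le, lex_zero, lex_add; simpl.
  intros [h1|[h1 h1']] [h2|[h2 h2']]; try lia.
  subst. assert (x = zero) by (apply le_anti; assumption). subst.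
  rewrite add0l, add0r. f_equal; lia.
Qed.

Lemma lex_comm_zero_r (G : POGroup) :
  forall X Y : Z * G, lex_le G (lex_zero G) Y -> lex_le G Y (0%Z, zero) ->
    lex_add G X Y = lex_add G Y X.
Proof. intros X Y h1 h2. symmetry. apply lex_comm_zero_l; assumption. Qed.

Lemma fwd_rdp (G : POGroup) : RDP1 (lex_add G) (lex_zero G) (lex_le G) -> RDP1_pog G.
Proof.
  intros H a1 a2 b1 b2 p1 p2 p3 p4 e.
  assert (h1 : lex_le G (lex_zero G) (0%Z, a1)) by (apply lex_pos; right; auto).
  assert (h2 : lex_le G (lex_zero G) (0%Z, a2)) by (apply lex_pos; right; auto).
  assert (h3 : lex_le G (lex_zero G) (0%Z, b1)) by (apply lex_pos; right; auto).
  assert (h4 : lex_le G (lex_zero G) (0%Z, b2)) by (apply lex_pos; right; auto).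
  assert (he : lex_add G (0%Z, a1) (0%Z, a2) = lex_add G (0%Z, b1) (0%Z, b2))
    by (unfold lex_add; simpl; rewrite e; reflexivity).
  destruct (H _ _ _ _ h1 h2 h3 h4 he) as [[q11 g11] [[q12 g12] [[q21 g21] [[q22 g22]
    (P11 & P12 & P21 & P22 & E1 & E2 & E3 & E4 & Hc)]]]].
  unfold lex_add in E1, E2, E3, E4; simpl in E1, E2, E3, E4.
  injection E1 as E1z E1g. injection E2 as E2z E2g.
  injection E3 as E3z E3g. injection E4 as E4z E4g.
  pose proof (pos_fst G _ _ P11). pose proof (pos_fst G _ _ P12).
  pose proof (pos_fst G _ _ P21). pose proof (pos_fst G _ _ P22).
  assert (q11 = 0%Z) by lia. assert (q12 = 0%Z) by lia.
  assert (q21 = 0%Z) by lia. assert (q22 = 0%Z) by lia. subst q11 q12 q21 q22.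
  exists g11, g12, g21, g22.
  repeat split; try assumption; try (apply pos_snd0; assumption).
  intros x y hx1 hx2 hy1 hy2.
  assert (K : lex_add G (0%Z, x) (0%Z, y) = lex_add G (0%Z, y) (0%Z, x)).
  { apply Hc; unfold lex_le, lex_zero; simpl; right; auto. }
  unfold lex_add in K; simpl in K. injection K as K. exact K.
Qed.

Lemma fwd_lower (G : POGroup) : RDP1 (lex_add G) (lex_zero G) (lex_le G) ->
  forall a b : G, exists d, le d a /\ le d b.
Proof.
  intros H a b.
  assert (h1 : lex_le G (lex_zero G) (1%Z, a)) by (apply lex_pos; left; lia).
  assert (h3 : lex_le G (lex_zero G) (1%Z, b)) by (apply lex_pos; left; lia).
  assert (h4 : lex_le G (lex_zero G) (1%Z, add (opp b) (add a a))) by (apply lex_pos; left; lia).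
  assert (he : lex_add G (1%Z, a) (1%Z, a) = lex_add G (1%Z, b) (1%Z, add (opp b) (add a a)))
    by (unfold lex_add; simpl; rewrite addNKl; reflexivity).
  destruct (H _ _ _ _ h1 h1 h3 h4 he) as [[q11 g11] [[q12 g12] [[q21 g21] [[q22 g22]
    (P11 & P12 & P21 & P22 & E1 & E2 & E3 & E4 & Hc)]]]].
  unfold lex_add in E1, E2, E3, E4; simpl in E1, E2, E3, E4.
  injection E1 as E1z E1g. injection E2 as E2z E2g.
  injection E3 as E3z E3g. injection E4 as E4z E4g.
  pose proof (pos_fst G _ _ P11). pose proof (pos_fst G _ _ P12).
  pose proof (pos_fst G _ _ P21). pose proof (pos_fst G _ _ P22).
  destruct (Z.eq_dec q11 0) as [Hq|Hq].
  - assert (q22 = 0%Z) by lia. subst q11 q22.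
    exists g21. split.
    + rewrite E2g. apply le_add_pos_r. apply pos_snd0; assumption.
    + rewrite E3g. apply le_add_pos_l. apply pos_snd0; assumption.
  - assert (q12 = 0%Z) by lia. assert (q21 = 0%Z) by lia. subst q12 q21.
    exists g11. split.
    + rewrite E1g. apply le_add_pos_r. apply pos_snd0; assumption.
    + rewrite E3g. apply le_add_pos_r. apply pos_snd0; assumption.
Qed.

Lemma dir_lower (G : POGroup) : directed G -> forall a b : G, exists d, le d a /\ le d b.
Proof.
  intros H a b. destruct (H (opp a) (opp b)) as [c [h1 h2]].
  exists (opp c). split.
  - rewrite <- (opp_opp G a). apply le_opp; assumption.
  - rewrite <- (opp_opp G b). apply le_opp; assumption.
Qed.

Lemma fwd_dir (G : POGroup) : RDP1 (lex_add G) (lex_zero G) (lex_le G) -> directed G.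
Proof.
  intros H a b. destruct (fwd_lower G H (opp a) (opp b)) as [d [h1 h2]].
  exists (opp d). split.
  - rewrite <- (opp_opp G a). apply le_opp; assumption.
  - rewrite <- (opp_opp G b). apply le_opp; assumption.
Qed.

Lemma bwd (G : POGroup) : directed G -> RDP1_pog G -> RDP1 (lex_add G) (lex_zero G) (lex_le G).
Proof.
  intros Hdir HR [m1 a1] [m2 a2] [n1 b1] [n2 b2] P1 P2 P3 P4 E.
  unfold lex_add in E; simpl in E. injection E as Em Ea.
  pose proof (pos_fst G _ _ P1). pose proof (pos_fst G _ _ P2).
  pose proof (pos_fst G _ _ P3). pose proof (pos_fst G _ _ P4).
  destruct (Z.lt_trichotomy m1 n1) as [Hlt|[Heq|Hgt]].
  - exists (m1, a1), (0%Z, zero), ((n1 - m1)%Z, add (opp a1) b1), (n2, b2).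
    unfold lex_add; simpl.
    repeat split; try assumption.
    + apply lex_pos; right; split; [reflexivity | apply le_refl].
    + apply lex_pos; left; lia.
    + f_equal; try lia; rewrite add0r; reflexivity.
    + f_equal; try lia; rewrite <- addA, <- Ea, addKl; reflexivity.
    + f_equal; try lia; rewrite addNKl; reflexivity.
    + f_equal; try lia; rewrite add0l; reflexivity.
    + intros x y hx1 hx2 _ _. apply lex_comm_zero_l; assumption.
  - subst n1. assert (n2 = m2) by lia. subst n2.
    destruct (Z.lt_trichotomy 0 m2) as [Hm2|[Hm2|Hm2]]; [ | | lia].
    +
      assert (Hd : exists d, le d a1 /\ le d b1 /\ ((0 < m1)%Z \/ d = zero)).
      { destruct (proj1 (lex_pos G m1 a1) P1) as [h|[h h']].
        - destruct (dir_lower G Hdir a1 b1) as [d [d1 d2]]. exists d; auto.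
        - subst m1. exists zero. split; [exact h'|]. split; [apply pos_snd0; assumption | auto]. }
      destruct Hd as [d [hd1 [hd2 hd3]]].
      pose proof (le_sub_l G _ _ hd1) as ha'. pose proof (le_sub_l G _ _ hd2) as hb'.
      destruct (Hdir (add (opp d) a1) (add (opp d) b1)) as [u [hu1 hu2]].
      pose proof (le_sub_l G _ _ hu1) as hx. pose proof (le_sub_l G _ _ hu2) as hy.
      assert (he : add (add (opp d) a1) (add (opp (add (opp d) a1)) u) =
                   add (add (opp d) b1) (add (opp (add (opp d) b1)) u))
        by (rewrite !addNKl; reflexivity).
      destruct (HR _ _ _ _ ha' hx hb' hy he) as [d11 [d12 [d21 [d22
        (Q11 & Q12 & Q21 & Q22 & Ha & _ & Hb & _ & Hc)]]]].
      assert (Hcomm : add d12 d21 = add d21 d12) by (apply Hc; auto using le_refl).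
      assert (Ha' : a1 = add d (add d11 d12)) by (rewrite <- Ha, addNKl; reflexivity).
      assert (Hb' : b1 = add d (add d11 d21)) by (rewrite <- Hb, addNKl; reflexivity).
      exists (m1, add d d11), (0%Z, d12), (0%Z, d21), (m2, add (opp d21) a2).
      unfold lex_add; simpl.
      repeat split.
      * apply lex_pos. destruct hd3 as [h|h]; [left; exact h|].
        subst d. rewrite add0l. destruct (proj1 (lex_pos G m1 a1) P1) as [h|[h _]]; [left; exact h|].
        right; split; assumption.
      * apply lex_pos; right; split; [reflexivity|assumption].
      * apply lex_pos; right; split; [reflexivity|assumption].
      * apply lex_pos; left; assumption.
      * f_equal; try lia; rewrite <- addA; exact Ha'.
      * f_equal; try lia; rewrite addNKl; reflexivity.
      * f_equal; try lia; rewrite <- addA; exact Hb'.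
      * f_equal; try lia.
        apply (add_cancel_l G b1). rewrite <- Ea. rewrite Ha', Hb'.
        rewrite <- !addA. rewrite (addA G d21 d12), <- Hcomm, <- (addA G d12 d21), addNKl.
        reflexivity.
      * apply lex_comm; exact Hc.
    + subst m2.
      assert (ha2 : le zero a2) by (apply pos_snd0; assumption).
      assert (hb2 : le zero b2) by (apply pos_snd0; assumption).
      destruct (Z.lt_trichotomy 0 m1) as [Hm1|[Hm1|Hm1]]; [ | | lia].
      *
        destruct (Hdir a2 b2) as [u [hu1 hu2]].
        pose proof (le_sub_r G _ _ hu1) as hx. pose proof (le_sub_r G _ _ hu2) as hy.
        assert (he : add (add u (opp a2)) a2 = add (add u (opp b2)) b2)
          by (rewrite !addNKr; reflexivity).
        destruct (HR _ _ _ _ hx ha2 hy hb2 he) as [e11 [e12 [e21 [e22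
          (Q11 & Q12 & Q21 & Q22 & _ & Ha2 & _ & Hb2 & Hc)]]]].
        assert (Hcomm : add e12 e21 = add e21 e12) by (apply Hc; auto using le_refl).
        exists (m1, add a1 (opp e12)), (0%Z, e12), (0%Z, e21), (0%Z, e22).
        unfold lex_add; simpl.
        repeat split.
        -- apply lex_pos; left; assumption.
        -- apply lex_pos; right; split; [reflexivity|assumption].
        -- apply lex_pos; right; split; [reflexivity|assumption].
        -- apply lex_pos; right; split; [reflexivity|assumption].
        -- f_equal; try lia; rewrite addNKr; reflexivity.
        -- f_equal; try lia; exact Ha2.
        -- f_equal; try lia.
           apply (add_cancel_r G b2). rewrite <- Ea. rewrite Ha2, Hb2.
           rewrite <- !addA. rewrite (addA G e21 e12), <- Hcomm, <- (addA G e12 e21), addKl.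
           reflexivity.
        -- f_equal; try lia; exact Hb2.
        -- apply lex_comm; exact Hc.
      * subst m1.
        assert (ha1 : le zero a1) by (apply pos_snd0; assumption).
        assert (hb1 : le zero b1) by (apply pos_snd0; assumption).
        destruct (HR _ _ _ _ ha1 ha2 hb1 hb2 Ea) as [c11 [c12 [c21 [c22
          (Q11 & Q12 & Q21 & Q22 & Ha1 & Ha2 & Hb1 & Hb2 & Hc)]]]].
        exists (0%Z, c11), (0%Z, c12), (0%Z, c21), (0%Z, c22).
        unfold lex_add; simpl.
        repeat split; try (apply lex_pos; right; split; [reflexivity|assumption]);
          try (f_equal; assumption).
        apply lex_comm; exact Hc.
  - exists (n1, b1), ((m1 - n1)%Z, add (opp b1) a1), (0%Z, zero), (m2, a2).
    unfold lex_add; simpl.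
    repeat split; try assumption.
    + apply lex_pos; left; lia.
    + apply lex_pos; right; split; [reflexivity | apply le_refl].
    + f_equal; try lia; rewrite addNKl; reflexivity.
    + f_equal; try lia; rewrite add0l; reflexivity.
    + f_equal; try lia; rewrite add0r; reflexivity.
    + f_equal; try lia; rewrite <- addA, Ea, addKl; reflexivity.
    + intros x y _ _ hy1 hy2. apply lex_comm_zero_r; assumption.
Qed.

Theorem theorem3p7 (G : POGroup) :
  RDP1 (lex_add G) (lex_zero G) (lex_le G) <-> (directed G /\ RDP1_pog G).
Proof.
  split.
  - intro H. split; [apply fwd_dir | apply fwd_rdp]; exact H.
  - intros [H1 H2]. apply bwd; assumption.
Qed.
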